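(* Let $A:\mathbb{R}^n\to\mathbb{R}^m$ be a bounded linear operator, let $u^\dagger\in\mathbb{R}^n$ with $v:=Au^\dagger$, let $\wp>0$ with $\|u^\dagger-\Psi(v)\|\le\wp$. Let $\{v^\delta\}_{\delta>0}$ be noisy data with $\|v^\delta-v\|\le\delta$, and assume $\|\Psi(v^\delta)-\Psi(v)\|\to0$ as $\delta\to0$. Assume $C:=\eta-\frac{\eta_1}{\tau}-\nu_0(\wp+\nu_1)-\eta_0\eta_1>0$. Let $k_\delta$ be the discrepancy stopping index of the IRMGL+$\Psi$ iteration with noisy data $v^\delta$. Then there exists a solution $u^\dagger$ of $Au=v$ such that $$\lim_{\delta\to0}\|u_{k_\delta}^\delta-u^\dagger\|=0.$$
   Context: All norms are Euclidean, $A^*=A^\top$. Vectors $u\in\mathbb{R}^n$ are images: $n=pq$, pixel set $S=\{(i,j):1\le i\le p,1\le j\le q\}$, $u$ identified with $u:S\to\mathbb{R}$. Graph Laplacian built from $u$: fix $R>0$, $\sigma>0$, a distance $\eth$ on $S$; $g(a,b)=1$ if $0<\eth(a,b)\le R$, else $0$; $h_u(a,b)=\exp(-|u(a)-u(b)|^2/\sigma)$; $w_u=g\,h_u$; $W_u=[w_u(a,b)]$, $D_u=\mathrm{diag}(\sum_b w_u(a,b))$, $\Delta_u=D_u-W_u$. Noisy iteration: for a map $\Psi:\mathbb{R}^m\to\mathbb{R}^n$, $u_0^\delta=\Psi(v^\delta)$, $u_{k+1}^\delta=u_k^\delta-\alpha_k^\delta A^*(Au_k^\delta-v^\delta)-\beta_k^\delta\Delta_{u_k^\delta}u_k^\delta$,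 with constants $\eta_0,\eta_1,\nu_0,\nu_1,\nu_2>0$, $\alpha_k^\delta=\min\{\eta_0\|Au_k^\delta-v^\delta\|^2/\|A^*(Au_k^\delta-v^\delta)\|^2,\eta_1\}$ ($=\eta_1$ if the denominator vanishes), $\beta_k^\delta=\min\{\nu_0\|Au_k^\delta-v^\delta\|^2/\|\Delta_{u_k^\delta}u_k^\delta\|,\nu_1/\|\Delta_{u_k^\delta}u_k^\delta\|,\nu_2\}$ if $\Delta_{u_k^\delta}u_k^\delta\ne0$, else $0$. $\eta$ is a fixed constant with $0<\eta\le\min\{\eta_0/\|A\|^2,\eta_1\}$. With fixed $\tau>1$, $k_\delta=\min\{k\ge0:\|Au_k^\delta-v^\delta\|\le\tau\delta\}$. *)

(* Defs.v *)
From HB Require Import structures.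
From mathcomp Require Import all_boot all_order all_algebra.
From mathcomp Require Import all_classical all_reals all_analysis.
Set Implicit Arguments. Unset Strict Implicit. Unset Printing Implicit Defensive.
Import Order.TTheory GRing.Theory Num.Theory.
Local Open Scope ring_scope.
Local Open Scope classical_set_scope.

Section Defs.
Variable R : realType.

Definition norm2 (k : nat) (x : 'cV[R]_k) : R := Num.sqrt (\sum_i (x i 0) ^+ 2).

Definition opnorm (m n : nat) (A : 'M[R]_(m, n)) : R :=
  sup [set norm2 (A *m x) | x in [set x : 'cV[R]_n | norm2 x <= 1]].

(* pixel set S = {1..p} x {1..q}; the image u in R^(p*q) is identified with
   u : S -> R through the standard bijection of matrix.v (inverse of mxvec_index) *)
Definition pix (p q : nat) (k : 'I_(p * q)) : 'I_p * 'I_q :=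
  enum_val (cast_ord (esym (mxvec_cast p q)) k).

Definition is_distance (T : Type) (d : T -> T -> R) : Prop :=
  (forall a b, 0 <= d a b) /\ (forall a b, d a b = 0 <-> a = b) /\
  (forall a b, d a b = d b a) /\ (forall a b c, d a c <= d a b + d b c).

Section Graph.
Variables (p q : nat) (Rr sigma : R) (d : 'I_p * 'I_q -> 'I_p * 'I_q -> R).

Definition gfun (a b : 'I_(p * q)) : R :=
  if (0 < d (pix a) (pix b)) && (d (pix a) (pix b) <= Rr) then 1 else 0.

Definition hfun (u : 'cV[R]_(p * q)) (a b : 'I_(p * q)) : R :=
  expR (- ((u a 0 - u b 0) ^+ 2) / sigma).

Definition wfun (u : 'cV[R]_(p * q)) (a b : 'I_(p * q)) : R := gfun a b * hfun u a b.

Definition Wmat (u : 'cV[R]_(p * q)) : 'M[R]_(p * q) := \matrix_(a, b) wfun u a b.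
Definition Dmat (u : 'cV[R]_(p * q)) : 'M[R]_(p * q) :=
  diag_mx (\row_a \sum_b wfun u a b).
Definition Lap (u : 'cV[R]_(p * q)) : 'M[R]_(p * q) := Dmat u - Wmat u.
End Graph.

Section Iter.
Variables (m p q : nat) (A : 'M[R]_(m, p * q)) (Psi : 'cV[R]_m -> 'cV[R]_(p * q))
  (Rr sigma : R) (d : 'I_p * 'I_q -> 'I_p * 'I_q -> R)
  (eta0 eta1 nu0 nu1 nu2 : R).

Definition alpha_step (vd : 'cV[R]_m) (u : 'cV[R]_(p * q)) : R :=
  let r := A *m u - vd in
  let g := A^T *m r in
  if norm2 g == 0 then eta1
  else Num.min (eta0 * norm2 r ^+ 2 / norm2 g ^+ 2) eta1.

Definition beta_step (vd : 'cV[R]_m) (u : 'cV[R]_(p * q)) : R :=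
  let r := A *m u - vd in
  let L := Lap Rr sigma d u *m u in
  if L != 0 then
    Num.min (Num.min (nu0 * norm2 r ^+ 2 / norm2 L) (nu1 / norm2 L)) nu2
  else 0.

Definition step (vd : 'cV[R]_m) (u : 'cV[R]_(p * q)) : 'cV[R]_(p * q) :=
  u - alpha_step vd u *: (A^T *m (A *m u - vd)) - beta_step vd u *: (Lap Rr sigma d u *m u).

Definition irmgl (vd : 'cV[R]_m) (k : nat) : 'cV[R]_(p * q) := iter k (step vd) (Psi vd).

Definition is_stop_index (tau delta : R) (vd : 'cV[R]_m) (k : nat) : Prop :=
  norm2 (A *m irmgl vd k - vd) <= tau * delta /\
  (forall j, (j < k)%N -> tau * delta < norm2 (A *m irmgl vd j - vd)).
End Iter.
End Defs.

(* Main.v *)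
Require Import Defs.
From HB Require Import structures.
From mathcomp Require Import all_boot all_order all_algebra.
From mathcomp Require Import all_classical all_reals all_analysis.
From mathcomp Require Import ring lra.
Import Order.TTheory GRing.Theory Num.Theory.
Import numFieldNormedType.Exports.
Set Implicit Arguments. Unset Strict Implicit. Unset Printing Implicit Defensive.
Local Open Scope ring_scope.
Section Vec.
Variable R : realType.

Definition dot k (x y : 'cV[R]_k) : R := \sum_i x i 0 * y i 0.

Lemma dot_ge0 k (x : 'cV[R]_k) : 0 <= dot x x.
Proof. by apply: sumr_ge0 => i _; rewrite -expr2 sqr_ge0. Qed.

Lemma dotC k (x y : 'cV[R]_k) : dot x y = dot y x.
Proof. by apply: eq_bigr => i _; rewrite mulrC. Qed.

Lemma dotDl k (x y z : 'cV[R]_k) : dot (x + y) z = dot x z + dot y z.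
Proof. by rewrite /dot -big_split; apply: eq_bigr => i _; rewrite mxE mulrDl. Qed.

Lemma dotNl k (x z : 'cV[R]_k) : dot (- x) z = - dot x z.
Proof. by rewrite /dot -sumrN; apply: eq_bigr => i _; rewrite mxE mulNr. Qed.

Lemma dotZl k a (x z : 'cV[R]_k) : dot (a *: x) z = a * dot x z.
Proof. by rewrite /dot mulr_sumr; apply: eq_bigr => i _; rewrite mxE mulrA. Qed.

Lemma dotBl k (x y z : 'cV[R]_k) : dot (x - y) z = dot x z - dot y z.
Proof. by rewrite dotDl dotNl. Qed.

Lemma dotDr k (x y z : 'cV[R]_k) : dot z (x + y) = dot z x + dot z y.
Proof. by rewrite dotC dotDl !(dotC z). Qed.
Lemma dotBr k (x y z : 'cV[R]_k) : dot z (x - y) = dot z x - dot z y.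
Proof. by rewrite dotC dotBl !(dotC z). Qed.
Lemma dotZr k a (x z : 'cV[R]_k) : dot z (a *: x) = a * dot z x.
Proof. by rewrite dotC dotZl dotC. Qed.
Lemma dot0l k (z : 'cV[R]_k) : dot 0 z = 0.
Proof. by rewrite /dot big1 // => i _; rewrite mxE mul0r. Qed.

Lemma dot_mulmx k l (M : 'M[R]_(k, l)) x y : dot (M *m x) y = dot x (M^T *m y).
Proof.
rewrite /dot.
under eq_bigr do rewrite mxE big_distrl /=.
rewrite exchange_big /=; apply: eq_bigr => j _.
rewrite mxE big_distrr /=; apply: eq_bigr => i _.
by rewrite mxE; ring.
Qed.

Lemma norm2_sq k (x : 'cV[R]_k) : norm2 x ^+ 2 = dot x x.
Proof.
rewrite /norm2 sqr_sqrtr; last by apply: sumr_ge0 => i _; rewrite sqr_ge0.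
by apply: eq_bigr => i _; rewrite expr2.
Qed.

Lemma norm2_ge0 k (x : 'cV[R]_k) : 0 <= norm2 x.
Proof. exact: sqrtr_ge0. Qed.

Lemma norm2_sqrt k (x : 'cV[R]_k) : norm2 x = Num.sqrt (dot x x).
Proof. by rewrite -norm2_sq sqrtr_sqr ger0_norm // norm2_ge0. Qed.

Lemma dot_eq0 k (x : 'cV[R]_k) : dot x x = 0 -> x = 0.
Proof.
move=> h; apply/matrixP => i j; rewrite (ord1 j) mxE.
have /eqP: x i 0 ^+ 2 = 0.
  apply/eqP; rewrite eq_le sqr_ge0 andbT -h /dot (bigD1 i) //= -expr2 lerDl.
  by apply: sumr_ge0 => l _; rewrite -expr2 sqr_ge0.
by rewrite sqrf_eq0 => /eqP.
Qed.
End Vec.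
Section Vec2.
Variable R : realType.
Implicit Types k l : nat.

Lemma sq_le (u v : R) : 0 <= v -> u ^+ 2 <= v ^+ 2 -> u <= v.
Proof. move=> v0 h; rewrite leNgt; apply/negP => uv; nra. Qed.

Lemma CS k (x y : 'cV[R]_k) : dot x y ^+ 2 <= dot x x * dot y y.
Proof.
set a := dot x x; set b := dot x y; set c := dot y y.
have key t : 0 <= a - 2 * t * b + t ^+ 2 * c.
  have := dot_ge0 (x - t *: y).
  rewrite dotBl !dotBr !dotZl !dotZr (dotC y x) -/a -/b -/c.
  suff -> : a - t * b - (t * b - t * (t * c)) = a - 2 * t * b + t ^+ 2 * c by [].
  by ring.
have c0 : 0 <= c := dot_ge0 y.
case: (eqVneq c 0) => hc.
  have hb : b = 0.
    have [//|hb] := eqVneq b 0; exfalso; have := key ((a + 1) / (2 * b)).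
    have -> : a - 2 * ((a + 1) / (2 * b)) * b + ((a + 1) / (2 * b)) ^+ 2 * c = -1.
      by rewrite hc; field; rewrite hb.
    by rewrite ler0N1.

  by rewrite hb hc expr2 !mul0r mulr0.
have cp : 0 < c by rewrite lt_neqAle eq_sym hc c0.
have := key (b / c).
have -> : a - 2 * (b / c) * b + (b / c) ^+ 2 * c = (a * c - b ^+ 2) / c.
  by field; rewrite hc.
rewrite pmulr_lge0 ?invr_gt0 // subr_ge0 //.
Qed.

Lemma dot_abs_le k (x y : 'cV[R]_k) : `|dot x y| <= norm2 x * norm2 y.
Proof.
rewrite !norm2_sqrt -sqrtrM ?dot_ge0 // -sqrtr_sqr.
by apply: ler_wsqrtr; exact: CS.
Qed.

Lemma dot_le k (x y : 'cV[R]_k) : dot x y <= norm2 x * norm2 y.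
Proof. exact: le_trans (ler_norm _) (dot_abs_le x y). Qed.

Lemma norm2_eq0 k (x : 'cV[R]_k) : norm2 x = 0 -> x = 0.
Proof. by move=> h; apply: dot_eq0; rewrite -norm2_sq h expr2 mul0r. Qed.

Lemma norm2_0 k : norm2 (0 : 'cV[R]_k) = 0.
Proof. by rewrite norm2_sqrt dot0l sqrtr0. Qed.

Lemma norm2Z k a (x : 'cV[R]_k) : norm2 (a *: x) = `|a| * norm2 x.
Proof.
by rewrite !norm2_sqrt dotZl dotZr mulrA -expr2 sqrtrM ?sqr_ge0 // sqrtr_sqr.
Qed.

Lemma norm2N k (x : 'cV[R]_k) : norm2 (- x) = norm2 x.
Proof. by rewrite -scaleN1r norm2Z normrN normr1 mul1r. Qed.

Lemma norm2B k (x y : 'cV[R]_k) : norm2 (x - y) = norm2 (y - x).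
Proof. by rewrite -norm2N opprB. Qed.

Lemma norm2D k (x y : 'cV[R]_k) : norm2 (x + y) <= norm2 x + norm2 y.
Proof.
apply: sq_le; first by rewrite addr_ge0 ?norm2_ge0.
rewrite norm2_sq dotDl !dotDr (dotC y x) sqrrD !norm2_sq.
have := dot_le x y; lra.
Qed.

Lemma norm2_sub_le k (x y : 'cV[R]_k) : norm2 x - norm2 y <= norm2 (x - y).
Proof.
have := norm2D (x - y) y; rewrite subrK; lra.
Qed.

Lemma norm2_dist k (x y : 'cV[R]_k) : `|norm2 x - norm2 y| <= norm2 (x - y).
Proof.
rewrite ler_norml norm2_sub_le andbT.
have := norm2_sub_le y x; rewrite norm2B; lra.
Qed.

Lemma entry_le k (x : 'cV[R]_k) i : `|x i 0| <= norm2 x.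
Proof.
apply: sq_le; first exact: norm2_ge0.
rewrite norm2_sq (real_normK (num_real _)) /dot (bigD1 i) //= expr2 lerDl.
by apply: sumr_ge0 => l _; rewrite -expr2 sqr_ge0.
Qed.

Lemma norm2_le_sum k (x : 'cV[R]_k) : norm2 x <= \sum_i `|x i 0|.
Proof.
apply: sq_le; first by apply: sumr_ge0 => i _.
rewrite norm2_sq /dot expr2 big_distrl /=; apply: ler_sum => i _.
rewrite big_distrr /= (bigD1 i) //= -normrM.
have h1 : 0 <= \sum_(j | j != i) `|x i 0| * `|x j 0|.
  by apply: sumr_ge0 => j _; rewrite mulr_ge0.
have h2 : x i 0 * x i 0 <= `|x i 0 * x i 0| := ler_norm _.
lra.
Qed.

Lemma crude_bound k l (M : 'M[R]_(k, l)) x :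
  norm2 (M *m x) <= (\sum_i \sum_j `|M i j|) * norm2 x.
Proof.
apply: le_trans (norm2_le_sum _) _; rewrite mulr_suml; apply: ler_sum => i _.
rewrite mxE mulr_suml; apply: le_trans (ler_norm_sum _ _ _) _; apply: ler_sum => j _.
by rewrite normrM ler_wpM2l // entry_le.
Qed.

Local Open Scope classical_set_scope.

Lemma opnorm_has_sup k l (M : 'M[R]_(k, l)) :
  has_sup [set norm2 (M *m x) | x in [set x : 'cV[R]_l | norm2 x <= 1]].
Proof.
split.
  by exists (norm2 (M *m 0)); exists 0 => //=; rewrite norm2_0.
exists (\sum_i \sum_j `|M i j|) => _ [x /= hx <-].
apply: le_trans (crude_bound M x) _; rewrite ler_piMr //.
by apply: sumr_ge0 => i _; apply: sumr_ge0.
Qed.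

Lemma opnorm_ge0 k l (M : 'M[R]_(k, l)) : 0 <= opnorm M.
Proof.
have h : norm2 (M *m 0) <= opnorm M.
  apply: (sup_upper_bound (opnorm_has_sup M)).
  by exists 0; first by rewrite /= norm2_0 ler01.
by rewrite mulmx0 norm2_0 in h.
Qed.

Lemma opnorm_bound k l (M : 'M[R]_(k, l)) x : norm2 (M *m x) <= opnorm M * norm2 x.
Proof.
have [hx|hx] := eqVneq (norm2 x) 0.
  by rewrite hx (norm2_eq0 hx) mulmx0 norm2_0 mulr0.
have xp : 0 < norm2 x by rewrite lt_neqAle eq_sym hx norm2_ge0.
have : norm2 (M *m ((norm2 x)^-1 *: x)) <= opnorm M.
  apply: (sup_upper_bound (opnorm_has_sup M)).
  exists ((norm2 x)^-1 *: x) => //=.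
  by rewrite norm2Z ger0_norm ?invr_ge0 ?norm2_ge0 // mulVf.
rewrite -scalemxAr norm2Z ger0_norm ?invr_ge0 ?norm2_ge0 //.
move=> h; have := ler_wpM2r (ltW xp) h; by rewrite mulrAC mulVf // mul1r.
Qed.

End Vec2.
Section Cluster.
Local Open Scope classical_set_scope.
Lemma cluster_seq (R : realType) n (u : nat -> 'cV[R]_n) (M : R) :
  (forall k, norm2 (u k) <= M) ->
  exists x : 'cV[R]_n, forall e : R, 0 < e -> forall N, exists k, (N <= k)%N /\ norm2 (u k - x) < e.
Proof.
move=> hM.
pose w : nat -> 'M[R]_(1, n) := fun k => (u k)^T.
pose S := [set v : 'M[R]_(1, n) | forall i, `[- M, M] (v ord0 i)].
have cpt : compact S.
  have := (@rV_compact R n (fun _ => `[- M, M]%classic) (fun _ => @segment_compact R (- M) M)). exact.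
have FS : (w @ \oo) S.
  apply: filterS (nbhs_infty_ge 0%N) => k _ i /=; rewrite /w mxE in_itv /= -ler_norml.
  exact: le_trans (entry_le _ _) (hM k).
have [x [_ clx]] := cpt (w @ \oo) _ FS.
exists x^T => e ep N.
pose e' := e / (n.+1)%:R.
have e'p : 0 < e' by rewrite /e' divr_gt0 // ltr0n.
have FN : (w @ \oo) [set v | exists k, (N <= k)%N /\ v = w k].
  by apply: filterS (nbhs_infty_ge N) => k hk; exists k.
have [_ [[k [hk ->]] hb]] := clx _ _ FN (nbhsx_ballx x e' e'p).
exists k; split => //.
move: hb; rewrite /ball /= /mx_ball => -[_ hb].
apply: (@le_lt_trans _ _ (\sum_i `|(u k - x^T) i 0|)); first exact: norm2_le_sum.
apply: (@le_lt_trans _ _ (\sum_(i < n) e')).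
  apply: ler_sum => i _; have := hb 0 i; rewrite /ball /= /w !mxE => h.
  by rewrite distrC ltW.
rewrite sumr_const card_ord /e' -[_ *+ n]mulr_natr mulrAC ltr_pdivrMr ?ltr0n //.
by rewrite ltr_pM2l // ltr_nat.
Qed.
End Cluster.
Section Energy.
Variables (R : realType) (m p q : nat) (A : 'M[R]_(m, p * q))
  (Rr sigma : R) (d : 'I_p * 'I_q -> 'I_p * 'I_q -> R)
  (eta0 eta1 nu0 nu1 nu2 eta tau wp : R).
Hypotheses (eta0p : 0 < eta0) (eta1p : 0 < eta1) (nu0p : 0 < nu0) (nu1p : 0 < nu1)
  (nu2p : 0 < nu2) (etap : 0 < eta) (etaA : eta * opnorm A ^+ 2 <= eta0)
  (eta_le : eta <= eta1) (tau1 : 1 < tau) (wpp : 0 < wp).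

Lemma minE (x y : R) : Num.min x y = if x <= y then x else y.
Proof. exact: minEle. Qed.

Lemma gnorm_le (r : 'cV[R]_m) : norm2 (A^T *m r) <= opnorm A * norm2 r.
Proof.
set g := A^T *m r.
have h : dot g g <= norm2 r * (opnorm A * norm2 g).
  rewrite {1}/g dot_mulmx trmxK.
  apply: le_trans (dot_le _ _) _; apply: ler_wpM2l; first exact: norm2_ge0.
  exact: opnorm_bound.
have [g0|gp] := eqVneq (norm2 g) 0.
  by rewrite g0 mulr_ge0 ?opnorm_ge0 ?norm2_ge0.
have gp' : 0 < norm2 g by rewrite lt_neqAle eq_sym gp norm2_ge0.
rewrite -norm2_sq expr2 in h.
have : norm2 g * norm2 g <= (opnorm A * norm2 r) * norm2 g by lra.
by rewrite ler_pM2r.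
Qed.

Lemma alpha_facts y u :
  let r := A *m u - y in let g := A^T *m r in
  let a := alpha_step A eta0 eta1 y u in
  [/\ eta <= a, a <= eta1 & a * dot g g <= eta0 * dot r r].
Proof.
move=> r g a; rewrite /a /alpha_step -/r -/g.
have drr0 := dot_ge0 r.
case: ifP => [/eqP g0|/negbT gn0].
  by rewrite -norm2_sq g0 expr2 mul0r mulr0 mulr_ge0 // ltW.
have gp : 0 < norm2 g by rewrite lt_neqAle eq_sym gn0 norm2_ge0.
have dgp : 0 < dot g g by rewrite -norm2_sq exprn_gt0.
rewrite !norm2_sq.
have hg : dot g g <= opnorm A ^+ 2 * dot r r.
  rewrite -!norm2_sq -exprMn; apply: lerXn2r; rewrite ?nnegrE ?norm2_ge0 //.
    by rewrite mulr_ge0 ?opnorm_ge0 ?norm2_ge0.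
  exact: gnorm_le.
have hX : eta <= eta0 * dot r r / dot g g.
  rewrite ler_pdivlMr //.
  apply: le_trans (_ : eta * (opnorm A ^+ 2 * dot r r) <= _).
    by apply: ler_wpM2l => //; exact: ltW.
  by rewrite mulrA; apply: ler_wpM2r.
rewrite minE; case: ifP => h.
  split => //; by rewrite mulrAC -mulrA divff ?mulr1 // gt_eqF.
split => //.
move/negbT: h; rewrite -ltNge => h.
apply: le_trans (_ : eta0 * dot r r / dot g g * dot g g <= _).
  by apply: ler_wpM2r; [exact: dot_ge0 | exact: ltW].
by rewrite divfK // gt_eqF.
Qed.

Lemma beta_facts y u :
  let r := A *m u - y in let L := Lap Rr sigma d u *m u in
  let b := beta_step A Rr sigma d nu0 nu1 nu2 y u in
  [/\ 0 <= b, b <= nu2, b * norm2 L <= nu0 * dot r r & b * norm2 L <= nu1].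
Proof.
move=> r L b; rewrite /b /beta_step -/r -/L.
have drr0 := dot_ge0 r.
case: ifP => [Ln0|/negbT/negPn/eqP L0]; last first.
  by rewrite L0 norm2_0 mul0r; split => //; rewrite ?mulr_ge0 // ltW.
have nLp : 0 < norm2 L.
  rewrite lt_neqAle norm2_ge0 andbT eq_sym; apply/eqP => h.
  by move/eqP: Ln0; apply; apply: norm2_eq0.
rewrite !norm2_sq.
set X := nu0 * dot r r / norm2 L; set Y := nu1 / norm2 L.
have X0 : 0 <= X by rewrite /X divr_ge0 ?mulr_ge0 // ltW.
have Y0 : 0 <= Y by rewrite /Y divr_ge0 // ltW.
have XL : X * norm2 L = nu0 * dot r r by rewrite /X divfK // gt_eqF.
have YL : Y * norm2 L = nu1 by rewrite /Y divfK // gt_eqF.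
have hb0 : 0 <= Num.min (Num.min X Y) nu2 by rewrite !le_min X0 Y0 ltW.
have hbX : Num.min (Num.min X Y) nu2 <= X by rewrite !ge_min lexx.
have hbY : Num.min (Num.min X Y) nu2 <= Y by rewrite !ge_min lexx orbT.
have hb2 : Num.min (Num.min X Y) nu2 <= nu2 by rewrite !ge_min lexx orbT.
split => //.
- by rewrite -XL; apply: ler_wpM2r => //; exact: ltW.
- by rewrite -YL; apply: ler_wpM2r => //; exact: ltW.
Qed.

Lemma zmod4 (V : zmodType) (x y z w : V) : x - y - z - w = x - w - (y + z).
Proof. rewrite opprD -!addrA; congr (x + _); by rewrite [RHS]addrC -addrA. Qed.

Definition Cst := eta - eta1 / tau - nu0 * (wp + nu1) - eta0 * eta1.

Lemma energy y u uh delta :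
  0 <= delta -> norm2 (y - A *m uh) <= delta ->
  tau * delta <= norm2 (A *m u - y) -> norm2 (u - uh) <= wp ->
  dot (step A Rr sigma d eta0 eta1 nu0 nu1 nu2 y u - uh)
      (step A Rr sigma d eta0 eta1 nu0 nu1 nu2 y u - uh)
  <= dot (u - uh) (u - uh) - 2 * Cst * dot (A *m u - y) (A *m u - y).
Proof.
move=> d0 hy hr he.
have [ha1 ha2 ha3] := alpha_facts y u.
have [hb1 hb2 hb3 hb4] := beta_facts y u.
set r := A *m u - y in hr ha3 hb3 *.
set g := A^T *m r in ha3 *.
set L := Lap Rr sigma d u *m u in hb3 hb4 *.
set a := alpha_step A eta0 eta1 y u in ha1 ha2 ha3 *.
set b := beta_step A Rr sigma d nu0 nu1 nu2 y u in hb1 hb2 hb3 hb4 *.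
set e := u - uh in he *.
have -> : step A Rr sigma d eta0 eta1 nu0 nu1 nu2 y u - uh = e - (a *: g + b *: L).
  by rewrite /step -/r -/g -/L -/a -/b /e zmod4.
set w := a *: g + b *: L.
have Ew0 : forall e' w' : 'cV[R]_(p * q),
    dot (e' - w') (e' - w') = dot e' e' - 2 * dot e' w' + dot w' w'.
  by move=> e' w'; rewrite dotBl !dotBr (dotC w' e'); ring.
have Ew : dot (e - w) (e - w) = dot e e - 2 * (a * dot e g + b * dot e L) + dot w w.
  by rewrite Ew0 /w (dotDr (a *: g) (b *: L) e) !dotZr.
rewrite Ew.
have ha0 : 0 <= a by apply: le_trans (ltW etap) ha1.
have drr0 := dot_ge0 r.
have nr0 := norm2_ge0 r.
have drr : dot r r = norm2 r * norm2 r by rewrite -norm2_sq expr2.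
have hX : eta * dot r r - eta1 * (dot r r / tau) <= a * dot e g.
  have -> : dot e g = dot r r + dot (y - A *m uh) r.
    rewrite /g -dot_mulmx /e mulmxBr -dotDl; congr (dot _ _).
    by rewrite /r addrA subrK.
  have hZ : - (delta * norm2 r) <= dot (y - A *m uh) r.
    have := dot_abs_le (y - A *m uh) r; rewrite ler_norml => /andP[h _].
    apply: le_trans h; rewrite lerN2; apply: ler_wpM2r => //.
  have h1 : delta * norm2 r <= dot r r / tau.
    have taup : 0 < tau by apply: lt_trans tau1.
    rewrite ler_pdivlMr // drr.
    have : tau * delta * norm2 r <= norm2 r * norm2 r by apply: ler_wpM2r.
    lra.
  have h2 : a * (delta * norm2 r) <= eta1 * (dot r r / tau).
    apply: ler_pM => //; first by rewrite mulr_ge0.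
  have h3 : eta * dot r r <= a * dot r r by apply: ler_wpM2r.
  have h4 : a * - (delta * norm2 r) <= a * dot (y - A *m uh) r by apply: ler_wpM2l.
  rewrite mulrN in h4; rewrite mulrDr; lra.
have hY : - (b * dot e L) <= wp * (nu0 * dot r r).
  have := dot_abs_le e L; rewrite ler_norml => /andP[h _].
  have : b * - (norm2 e * norm2 L) <= b * dot e L by apply: ler_wpM2l.
  have : norm2 e * (b * norm2 L) <= wp * (nu0 * dot r r).
    by apply: ler_pM => //; rewrite ?norm2_ge0 ?mulr_ge0 ?norm2_ge0.
  rewrite mulrN; move=> h1 h2.
  have : b * (norm2 e * norm2 L) = norm2 e * (b * norm2 L) by ring.
  lra.
have hW : dot w w <= 2 * (eta1 * (eta0 * dot r r)) + 2 * ((nu0 * dot r r) * nu1).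
  have hn : norm2 w <= a * norm2 g + b * norm2 L.
    apply: le_trans (norm2D _ _) _.
    by rewrite !norm2Z !ger0_norm.
  have hw0 := norm2_ge0 w.
  have hag : (a * norm2 g) ^+ 2 <= eta1 * (eta0 * dot r r).
    rewrite exprMn norm2_sq expr2 -mulrA; apply: ler_pM => //.
    by rewrite mulr_ge0 ?dot_ge0.
  have hbl : (b * norm2 L) ^+ 2 <= (nu0 * dot r r) * nu1.
    rewrite expr2; apply: ler_pM => //; by rewrite mulr_ge0 ?norm2_ge0.
  rewrite -norm2_sq.
  have hag0 : 0 <= a * norm2 g by rewrite mulr_ge0 ?norm2_ge0.
  have hbl0 : 0 <= b * norm2 L by rewrite mulr_ge0 ?norm2_ge0.
  have : norm2 w ^+ 2 <= (a * norm2 g + b * norm2 L) ^+ 2.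
    by apply: lerXn2r; rewrite ?nnegrE ?addr_ge0.
  move: hag hbl; set s := a * norm2 g; set t := b * norm2 L.
  move=> hag hbl h.
  have : (s + t) ^+ 2 <= 2 * s ^+ 2 + 2 * t ^+ 2.
    have h' := sqr_ge0 (s - t); nra.
  lra.
rewrite /Cst.
have E1 : (eta - eta1 / tau - nu0 * (wp + nu1) - eta0 * eta1) * dot r r =
  eta * dot r r - eta1 * (dot r r / tau) - wp * (nu0 * dot r r) - (nu0 * dot r r) * nu1
  - eta1 * (eta0 * dot r r) by ring.
rewrite -mulrA E1; lra.
Qed.



Lemma sq_lt (u v : R) : 0 <= u -> 0 <= v -> u ^+ 2 < v ^+ 2 -> u < v.
Proof. move=> h1 h2 h3; nra. Qed.

Lemma norm2_le_dot k (x y : 'cV[R]_k) : dot x x <= dot y y -> norm2 x <= norm2 y.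
Proof. by move=> h; rewrite !norm2_sqrt; apply: ler_wsqrtr. Qed.

Lemma dot_le_sq k (x : 'cV[R]_k) c : 0 <= c -> dot x x <= c ^+ 2 -> norm2 x <= c.
Proof. by move=> c0 h; apply: sq_le => //; rewrite norm2_sq. Qed.

Lemma norm2_small k (x : 'cV[R]_k) : (forall e, 0 < e -> norm2 x < e) -> x = 0.
Proof.
move=> h; apply: norm2_eq0; apply/eqP; rewrite eq_le norm2_ge0 andbT.
rewrite leNgt; apply/negP => hp; have := h _ hp; by rewrite ltxx.
Qed.

Variables (Psi : 'cV[R]_m -> 'cV[R]_(p * q)) (udag : 'cV[R]_(p * q)).
Hypothesis Cpos : 0 < Cst.
Hypothesis hwp0 : norm2 (udag - Psi (A *m udag)) <= wp.

Local Notation it y k := (irmgl A Psi Rr sigma d eta0 eta1 nu0 nu1 nu2 y k).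
Local Notation st y u := (step A Rr sigma d eta0 eta1 nu0 nu1 nu2 y u).

Lemma itS y k : it y k.+1 = st y (it y k). Proof. by []. Qed.

Lemma run y uh delta K j : 0 <= delta -> norm2 (y - A *m uh) <= delta ->
  norm2 (it y K - uh) <= wp ->
  (forall i, (K <= i)%N -> (i < K + j)%N -> tau * delta <= norm2 (A *m it y i - y)) ->
  dot (it y (K + j) - uh) (it y (K + j) - uh) + 2 * Cst * (j%:R * (tau * delta) ^+ 2)
  <= dot (it y K - uh) (it y K - uh).
Proof.
move=> d0 hy hK; elim: j => [|j IH] hi.
  by rewrite addn0 mul0r mulr0 addr0.
have hlt : (K + j < K + j.+1)%N by rewrite addnS ltnSn.
have IH' := IH (fun i h1 h2 => hi i h1 (ltn_trans h2 hlt)).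
have taup : 0 < tau by apply: lt_trans tau1.
have td0 : 0 <= tau * delta by rewrite mulr_ge0 // ltW.
have hKw : dot (it y K - uh) (it y K - uh) <= wp ^+ 2.
  by rewrite -norm2_sq; apply: lerXn2r; rewrite ?nnegrE ?norm2_ge0 // ltW.
have T0 : 0 <= 2 * Cst * (j%:R * (tau * delta) ^+ 2).
  by rewrite !mulr_ge0 ?sqr_ge0 // ltW.
have hn : norm2 (it y (K + j) - uh) <= wp.
  by apply: dot_le_sq; [exact: ltW | lra].
have hr := hi (K + j) (leq_addr _ _) hlt.
have E := energy d0 hy hr hn.
rewrite addnS itS.
have hsq : (tau * delta) ^+ 2 <= dot (A *m it y (K + j) - y) (A *m it y (K + j) - y).
  by rewrite -norm2_sq; apply: lerXn2r; rewrite ?nnegrE ?norm2_ge0.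
have hC : Cst * (tau * delta) ^+ 2 <= Cst * dot (A *m it y (K + j) - y) (A *m it y (K + j) - y).
  by apply: ler_wpM2l => //; exact: ltW.
rewrite -natr1; lra.
Qed.

Lemma run_mono y uh delta K j : 0 <= delta -> norm2 (y - A *m uh) <= delta ->
  norm2 (it y K - uh) <= wp ->
  (forall i, (K <= i)%N -> (i < K + j)%N -> tau * delta <= norm2 (A *m it y i - y)) ->
  norm2 (it y (K + j) - uh) <= norm2 (it y K - uh).
Proof.
move=> d0 hy hK hi; have := run d0 hy hK hi.
have taup : 0 < tau by apply: lt_trans tau1.
have T0 : 0 <= 2 * Cst * (j%:R * (tau * delta) ^+ 2).
  by rewrite !mulr_ge0 ?sqr_ge0 // ltW.
move=> h; apply: norm2_le_dot; lra.
Qed.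

Definition vv := A *m udag.
Local Notation U k := (it vv k).

Lemma vv0 : norm2 (vv - A *m udag) <= 0.
Proof. by rewrite /vv subrr norm2_0. Qed.

Lemma U_bound k : norm2 (U k - udag) <= wp.
Proof.
have h0 : norm2 (U 0 - udag) <= wp by rewrite /= /irmgl /= norm2B.
have h := @run_mono vv udag 0 0 k (lexx _) vv0 h0.
apply: le_trans h0; apply: h => i _ _; by rewrite mulr0 norm2_ge0.
Qed.

Lemma U_step k : dot (U k.+1 - udag) (U k.+1 - udag) <=
  dot (U k - udag) (U k - udag) - 2 * Cst * dot (A *m U k - vv) (A *m U k - vv).
Proof.
rewrite itS; apply: energy (lexx _) vv0 _ (U_bound k).
by rewrite mulr0 norm2_ge0.
Qed.

Lemma U_mono k j : dot (U (k + j) - udag) (U (k + j) - udag) <= dot (U k - udag) (U k - udag).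
Proof.
elim: j => [|j IH]; first by rewrite addn0.
apply: le_trans IH; rewrite addnS; apply: le_trans (U_step _) _.
have := dot_ge0 (A *m U (k + j) - vv).
have := Cpos; move=> h1 h2.
have : 0 <= Cst * dot (A *m U (k + j) - vv) (A *m U (k + j) - vv) by rewrite mulr_ge0 // ltW.
lra.
Qed.

Local Open Scope classical_set_scope.

Lemma U_res0 eps : 0 < eps -> exists N, forall k, (N <= k)%N -> norm2 (A *m U k - vv) < eps.
Proof.
move=> ep.
pose E k := dot (U k - udag) (U k - udag).
pose S := range (fun k => - E k).
have hS : has_sup S.
  split; first by exists (- E 0%N); exists 0%N.
  exists 0 => _ [k _ <-]; rewrite oppr_le0; exact: dot_ge0.
have e2p : 0 < 2 * Cst * eps ^+ 2 by rewrite !mulr_gt0 // exprn_gt0.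
have [_ [k0 _ <-] hk0] := sup_adherent e2p hS.
exists k0 => k hk.
have hmono : E k <= E k0 by rewrite /E -(subnKC hk); exact: U_mono.
have hsup : - E k.+1 <= sup S by apply: (sup_upper_bound hS); exists k.+1.
have hst := U_step k.
apply: sq_lt; rewrite ?norm2_ge0 ?ltW // norm2_sq.
have : 2 * Cst * dot (A *m U k - vv) (A *m U k - vv) < 2 * Cst * eps ^+ 2.
  rewrite /E in hmono hsup hk0; lra.
by rewrite ltr_pM2l // mulr_gt0.
Qed.

Local Close Scope classical_set_scope.

Lemma ubar_ex : exists ub : 'cV[R]_(p * q),
  forall e : R, 0 < e -> forall N, exists k, (N <= k)%N /\ norm2 (U k - ub) < e.
Proof.
apply: (@cluster_seq R _ (fun k => U k) (norm2 udag + wp)) => k.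
have := norm2D (U k - udag) udag; rewrite subrK.
have := U_bound k; lra.
Qed.

Section Ubar.
Variable ub : 'cV[R]_(p * q).
Hypothesis hub : forall e : R, 0 < e -> forall N, exists k, (N <= k)%N /\ norm2 (U k - ub) < e.

Lemma ubar_sol : A *m ub = vv.
Proof.
apply/eqP; rewrite -subr_eq0; apply/eqP; apply: norm2_small => e ep.
have c0 : 0 < opnorm A + 1 by rewrite ltr_pwDr ?opnorm_ge0.
pose e' := e / (2 * (opnorm A + 1)).
have e'p : 0 < e' by rewrite divr_gt0 // mulr_gt0.
have [N hN] := U_res0 e'p.
have [k [hk hU]] := hub e'p N.
have -> : A *m ub - vv = A *m (ub - U k) + (A *m U k - vv).
  by rewrite mulmxBr addrA subrK.
apply: le_lt_trans (norm2D _ _) _.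
have h1 := opnorm_bound A (ub - U k); rewrite norm2B in h1.
have h2 := hN k hk.
have h3 : opnorm A * norm2 (U k - ub) <= opnorm A * e'.
  by apply: ler_wpM2l; rewrite ?opnorm_ge0 // ltW.
have h4 : (opnorm A + 1) * e' = e / 2.
  by rewrite /e'; field; rewrite gt_eqF.
lra.
Qed.

Lemma U_conv eps : 0 < eps -> exists K, forall k, (K <= k)%N -> norm2 (U k - ub) < eps.
Proof.
move=> ep.
have e1p : 0 < Num.min eps wp by rewrite lt_min ep wpp.
have [k0 [_ hk0]] := hub e1p 0%N.
exists k0 => k hk; rewrite -(subnKC hk).
have hw : norm2 (U k0 - ub) <= wp.
  by apply: ltW; apply: lt_le_trans hk0 _; rewrite ge_min lexx orbT.
have hy : norm2 (vv - A *m ub) <= 0 by rewrite ubar_sol subrr norm2_0.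
apply: le_lt_trans (run_mono (j := (k - k0)%N) (lexx _) hy hw _) _.
  by move=> i _ _; rewrite mulr0 norm2_ge0.
apply: lt_le_trans hk0 _; rewrite ge_min lexx //.
Qed.

Lemma step_fixed u : A *m u = vv -> st vv u = u.
Proof.
move=> hu; rewrite /step hu subrr mulmx0 scaler0 subr0.
have [hb1 _ hb3 _] := beta_facts vv u.
move: hb1 hb3; rewrite hu subrr dot0l mulr0.
set b := beta_step _ _ _ _ _ _ _ _ _; set L := Lap _ _ _ _ *m _.
move=> hb1 hb3.
have [L0|Ln0] := eqVneq (norm2 L) 0.
  by rewrite (norm2_eq0 L0) scaler0 subr0.
have Lp : 0 < norm2 L by rewrite lt_neqAle eq_sym Ln0 norm2_ge0.
have -> : b = 0 by apply/eqP; rewrite eq_le hb1 andbT; nra.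
by rewrite scale0r subr0.
Qed.

Lemma U_fixed k : A *m U k = vv -> U k = ub.
Proof.
move=> hk.
have hfix : forall j, U (k + j) = U k.
  elim=> [|j IH]; first by rewrite addn0.
  by rewrite addnS itS IH step_fixed.
apply/eqP; rewrite -subr_eq0; apply/eqP; apply: norm2_small => e ep.
have [K hK] := U_conv ep.
have := hK (k + K)%N (leq_addl _ _); by rewrite hfix.
Qed.

End Ubar.
End Energy.
Section Cont.
Variable R : realType.
Variables (m n : nat).
Implicit Types (y : 'cV[R]_m) (u : 'cV[R]_n).

Definition jcs (F : 'cV[R]_m -> 'cV[R]_n -> R) y u := forall e : R, 0 < e ->
  exists2 r : R, 0 < r & forall y' u', norm2 (y' - y) < r -> norm2 (u' - u) < r ->
    `|F y' u' - F y u| < e.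

Definition jcv k (F : 'cV[R]_m -> 'cV[R]_n -> 'cV[R]_k) y u := forall e : R, 0 < e ->
  exists2 r : R, 0 < r & forall y' u', norm2 (y' - y) < r -> norm2 (u' - u) < r ->
    norm2 (F y' u' - F y u) < e.

Lemma min_lt (r1 r2 x : R) : x < Num.min r1 r2 -> x < r1 /\ x < r2.
Proof. by rewrite lt_min => /andP. Qed.

Lemma min_pos (r1 r2 : R) : 0 < r1 -> 0 < r2 -> 0 < Num.min r1 r2.
Proof. by move=> h1 h2; rewrite lt_min h1 h2. Qed.

Lemma jcs_ext F G y u : (forall y u, F y u = G y u) -> jcs F y u -> jcs G y u.
Proof.
move=> h hF e ep; have [r rp hr] := hF e ep; exists r => // y' u' h1 h2.
by rewrite -!h; apply: hr.
Qed.

Lemma jcv_ext k (F G : _ -> _ -> 'cV[R]_k) y u :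
  (forall y u, F y u = G y u) -> jcv F y u -> jcv G y u.
Proof.
move=> h hF e ep; have [r rp hr] := hF e ep; exists r => // y' u' h1 h2.
by rewrite -!h; apply: hr.
Qed.

Lemma jcs_const c y u : jcs (fun _ _ => c) y u.
Proof. by move=> e ep; exists 1 => // *; rewrite subrr normr0. Qed.

Lemma jcv_u y u : jcv (fun _ u => u) y u.
Proof. by move=> e ep; exists e. Qed.

Lemma jcv_y y u : jcv (fun y _ => y) y u.
Proof. by move=> e ep; exists e. Qed.

Lemma jcv_add k (F G : _ -> _ -> 'cV[R]_k) y u :
  jcv F y u -> jcv G y u -> jcv (fun y u => F y u + G y u) y u.
Proof.
move=> hF hG e ep.
have e2 : 0 < e / 2 by rewrite divr_gt0.
have [r1 r1p h1] := hF _ e2; have [r2 r2p h2] := hG _ e2.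
exists (Num.min r1 r2); first exact: min_pos.
move=> y' u' /min_lt[a1 a2] /min_lt[b1 b2].
have -> : F y' u' + G y' u' - (F y u + G y u) = (F y' u' - F y u) + (G y' u' - G y u).
  by rewrite opprD addrACA.
apply: le_lt_trans (norm2D _ _) _.
have := h1 _ _ a1 b1; have := h2 _ _ a2 b2; lra.
Qed.

Lemma jcv_opp k (F : _ -> _ -> 'cV[R]_k) y u :
  jcv F y u -> jcv (fun y u => - F y u) y u.
Proof.
move=> hF e ep; have [r rp h] := hF e ep; exists r => // y' u' a b.
by rewrite -opprD norm2N; apply: h.
Qed.

Lemma jcv_sub k (F G : _ -> _ -> 'cV[R]_k) y u :
  jcv F y u -> jcv G y u -> jcv (fun y u => F y u - G y u) y u.
Proof. by move=> hF hG; apply: jcv_add => //; apply: jcv_opp. Qed.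

Lemma jcv_mul k l (M : 'M[R]_(l, k)) (F : _ -> _ -> 'cV[R]_k) y u :
  jcv F y u -> jcv (fun y u => M *m F y u) y u.
Proof.
move=> hF e ep.
have c0 : 0 < opnorm M + 1 by rewrite ltr_pwDr ?opnorm_ge0.
have [r rp h] := hF (e / (opnorm M + 1)) (divr_gt0 ep c0).
exists r => // y' u' a b.
rewrite -mulmxBr; apply: le_lt_trans (opnorm_bound _ _) _.
have := h _ _ a b; rewrite ltr_pdivlMr // => h'.
apply: le_lt_trans h'; rewrite mulrDr mulr1 mulrC lerDl; exact: norm2_ge0.
Qed.

Lemma jcs_norm k (F : _ -> _ -> 'cV[R]_k) y u :
  jcv F y u -> jcs (fun y u => norm2 (F y u)) y u.
Proof.
move=> hF e ep; have [r rp h] := hF e ep; exists r => // y' u' a b.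
exact: le_lt_trans (norm2_dist _ _) (h _ _ a b).
Qed.

Lemma jcs_entry k (F : _ -> _ -> 'cV[R]_k) i y u :
  jcv F y u -> jcs (fun y u => F y u i 0) y u.
Proof.
move=> hF e ep; have [r rp h] := hF e ep; exists r => // y' u' a b.
have := entry_le (F y' u' - F y u) i; rewrite !mxE => h1.
exact: le_lt_trans h1 (h _ _ a b).
Qed.

Lemma fin_min k (Q : 'I_k -> R -> Prop) :
  (forall i r r', 0 < r' -> r' <= r -> Q i r -> Q i r') ->
  (forall i, exists2 r, 0 < r & Q i r) -> exists2 r, 0 < r & forall i, Q i r.
Proof.
move=> hmono hex.
suff : forall N, exists2 r, 0 < r & forall i : 'I_k, (i < N)%N -> Q i r.
  by move=> /(_ k) [r rp hr]; exists r => // i; apply: hr.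
elim=> [|N [r rp hr]]; first by exists 1.
case: (ltnP N k) => hN; last first.
  exists r => // i hi; apply: hr; exact: leq_trans (ltn_ord i) hN.
have [r0 r0p h0] := hex (Ordinal hN).
exists (Num.min r r0); first exact: min_pos.
move=> i; rewrite ltnS leq_eqVlt => /orP[/eqP hi|hi].
  have -> : i = Ordinal hN by apply: val_inj.
  by apply: hmono h0; [exact: min_pos | rewrite ge_min lexx orbT].
by apply: hmono (hr i hi); [exact: min_pos | rewrite ge_min lexx].
Qed.

Lemma jcv_entries k (F : _ -> _ -> 'cV[R]_k) y u :
  (forall i, jcs (fun y u => F y u i 0) y u) -> jcv F y u.
Proof.
move=> hF e ep.
pose e' := e / (k.+1)%:R.
have e'p : 0 < e' by rewrite divr_gt0 // ltr0n.
have [r rp hr] := fin_min (Q := fun i r => forall y' u', norm2 (y' - y) < r ->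
   norm2 (u' - u) < r -> `|F y' u' i 0 - F y u i 0| < e')
  (fun i r r' r'p hr' h y' u' a b => h y' u' (lt_le_trans a hr') (lt_le_trans b hr'))
  (fun i => hF i e' e'p).
exists r => // y' u' a b.
apply: le_lt_trans (norm2_le_sum _) _.
apply: (@le_lt_trans _ _ (\sum_(i < k) e')).
  by apply: ler_sum => i _; rewrite !mxE; apply: ltW; apply: hr.
rewrite sumr_const card_ord /e' -[_ *+ k]mulr_natr mulrAC ltr_pdivrMr ?ltr0n //.
by rewrite ltr_pM2l // ltr_nat.
Qed.

Lemma jcs_add F G y u : jcs F y u -> jcs G y u -> jcs (fun y u => F y u + G y u) y u.
Proof.
move=> hF hG e ep.
have e2 : 0 < e / 2 by rewrite divr_gt0.
have [r1 r1p h1] := hF _ e2; have [r2 r2p h2] := hG _ e2.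
exists (Num.min r1 r2); first exact: min_pos.
move=> y' u' /min_lt[a1 a2] /min_lt[b1 b2].
have -> : F y' u' + G y' u' - (F y u + G y u) = (F y' u' - F y u) + (G y' u' - G y u).
  by rewrite opprD addrACA.
apply: le_lt_trans (ler_normD _ _) _.
have := h1 _ _ a1 b1; have := h2 _ _ a2 b2; lra.
Qed.

Lemma jcs_opp F y u : jcs F y u -> jcs (fun y u => - F y u) y u.
Proof.
move=> hF e ep; have [r rp h] := hF e ep; exists r => // y' u' a b.
by rewrite -opprD normrN; apply: h.
Qed.

Lemma jcs_sub F G y u : jcs F y u -> jcs G y u -> jcs (fun y u => F y u - G y u) y u.
Proof. by move=> hF hG; apply: jcs_add => //; apply: jcs_opp. Qed.

Lemma mul_est (x dF nF nFp a e : R) : 0 < e -> 0 <= x -> 0 <= nFp -> 0 <= dF ->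
  0 <= nF -> x < e / (2 * (nF + 1)) -> nFp <= nF + 1 ->
  dF <= e / (2 * (`|a| + 1)) -> x * nFp + `|a| * dF < e.
Proof.
move=> ep x0 n0 d0 nF0 hx hn hd.
have c1 : 0 < nF + 1 by lra.
have c2 : 0 < `|a| + 1 by rewrite ltr_pwDr.
have h1 : x * nFp <= x * (nF + 1) by apply: ler_wpM2l.
have h2 : x * (nF + 1) < e / 2.
  have hx' : x * (2 * (nF + 1)) < e by rewrite -ltr_pdivlMr ?mulr_gt0.
  rewrite ltr_pdivlMr //; lra.
have h3 : `|a| * dF <= `|a| * (e / (2 * (`|a| + 1)))by apply: ler_wpM2l.
have h4 : `|a| * (e / (2 * (`|a| + 1))) <= e / 2.
  rewrite mulrA ler_pdivrMr ?mulr_gt0 //.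
  have : `|a| * e <= (`|a| + 1) * e by apply: ler_wpM2r; lra.
  have -> : e / 2 * (2 * (`|a| + 1)) = (`|a| + 1) * e by field.
  done.
lra.
Qed.

Lemma jcs_mul F G y u : jcs F y u -> jcs G y u -> jcs (fun y u => F y u * G y u) y u.
Proof.
move=> hF hG e ep.
have c1 : 0 < 2 * (`|G y u| + 1) by rewrite mulr_gt0 // ltr_pwDr.
have c2 : 0 < 2 * (`|F y u| + 1) by rewrite mulr_gt0 // ltr_pwDr.
have [r1 r1p h1] := hF _ (divr_gt0 ep c1).
have [r2 r2p h2] := hG _ (min_pos ltr01 (divr_gt0 ep c2)).
exists (Num.min r1 r2); first exact: min_pos.
move=> y' u' /min_lt[a1 a2] /min_lt[b1 b2].
have hF' := h1 _ _ a1 b1; have /min_lt[hG1 hG2] := h2 _ _ a2 b2.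
have -> : F y' u' * G y' u' - F y u * G y u = (F y' u' - F y u) * G y' u' + F y u * (G y' u' - G y u).
  by ring.
apply: le_lt_trans (ler_normD _ _) _; rewrite !normrM.
apply: (mul_est (nF := `|G y u|)) => //; rewrite ?normr_ge0 //; last exact: ltW.
have hb := ler_normD (G y u) (G y' u' - G y u); rewrite [G y u + _]addrC subrK in hb; lra.
Qed.

Lemma jcs_scale k (a : _ -> _ -> R) (F : _ -> _ -> 'cV[R]_k) y u :
  jcs a y u -> jcv F y u -> jcv (fun y u => a y u *: F y u) y u.
Proof.
move=> ha hF e ep.
have c1 : 0 < 2 * (norm2 (F y u) + 1) by rewrite mulr_gt0 // ltr_pwDr ?norm2_ge0.
have c2 : 0 < 2 * (`|(a y u)| + 1) by rewrite mulr_gt0 // ltr_pwDr.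
have [r1 r1p h1] := ha _ (divr_gt0 ep c1).
have [r2 r2p h2] := hF _ (min_pos ltr01 (divr_gt0 ep c2)).
exists (Num.min r1 r2); first exact: min_pos.
move=> y' u' /min_lt[a1 a2] /min_lt[b1 b2].
have hA' := h1 _ _ a1 b1; have /min_lt[hG1 hG2] := h2 _ _ a2 b2.
have -> : a y' u' *: F y' u' - (a y u) *: (F y u) = (a y' u' - (a y u)) *: F y' u' + (a y u) *: (F y' u' - (F y u)).
  by rewrite scalerBl scalerBr addrA subrK.
apply: le_lt_trans (norm2D _ _) _; rewrite !norm2Z.
apply: (mul_est (nF := norm2 (F y u))) => //; rewrite ?normr_ge0 ?norm2_ge0 //; last exact: ltW.
have hb := norm2D (F y u) (F y' u' - (F y u)); rewrite [F y u + _]addrC subrK in hb; lra.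
Qed.

Lemma jcs_inv F y u : F y u != 0 -> jcs F y u -> jcs (fun y u => (F y u)^-1) y u.
Proof.
move=> hn hF e ep.
have ap : 0 < `|(F y u)| by rewrite normr_gt0.
have [r rp h] := hF _ (min_pos (divr_gt0 ap (ltr0Sn R 1)) (divr_gt0 (mulr_gt0 ep (mulr_gt0 ap ap)) (ltr0Sn R 1))).
exists r => // y' u' a1 b1.
have /min_lt[hA hB] := h _ _ a1 b1.
set F' := F y' u' in hA hB *.
have tri : `|(F y u)| <= `|F'| + `|(F y u) - F'|.
  by have hb := ler_normD F' ((F y u) - F'); rewrite [F' + _]addrC subrK in hb.
have hd : `|(F y u) - F'| = `|F' - (F y u)| by rewrite distrC.
have F'p : `|(F y u)| / 2 < `|F'| by lra.
have F'n : F' != 0 by rewrite -normr_gt0; apply: le_lt_trans F'p; rewrite divr_ge0.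
have -> : F'^-1 - (F y u)^-1 = ((F y u) - F') / (F' * (F y u)) by field; rewrite F'n hn.
rewrite normrM normfV normrM ltr_pdivrMr ?mulr_gt0 ?normr_gt0 //.
have h1 : `|(F y u)| / 2 * `|(F y u)| <= `|F'| * `|(F y u)| by apply: ler_wpM2r; [exact: ltW | exact: ltW].
have h2 : e * (`|(F y u)| / 2 * `|(F y u)|) <= e * (`|F'| * `|(F y u)|) := ler_wpM2l (ltW ep) h1.
have E : e * (`|(F y u)| * `|(F y u)|) / 2 = e * (`|(F y u)| / 2 * `|(F y u)|) by field.
rewrite hd; lra.
Qed.

Lemma min_dist (a b a' b' e : R) : `|a' - a| < e -> `|b' - b| < e ->
  `|Num.min a' b' - Num.min a b| < e.
Proof.
rewrite !ltr_norml => /andP[h1 h2] /andP[h3 h4].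
have [hab|hab] := leP a b; have [hab'|hab'] := leP a' b'; by apply/andP; split; lra.
Qed.

Lemma jcs_min F G y u : jcs F y u -> jcs G y u -> jcs (fun y u => Num.min (F y u) (G y u)) y u.
Proof.
move=> hF hG e ep.
have [r1 r1p h1] := hF _ ep; have [r2 r2p h2] := hG _ ep.
exists (Num.min r1 r2); first exact: min_pos.
move=> y' u' /min_lt[a1 a2] /min_lt[b1 b2].
exact: min_dist (h1 _ _ a1 b1) (h2 _ _ a2 b2).
Qed.

Lemma jcs_exp F y u : jcs F y u -> jcs (fun y u => expR (F y u)) y u.
Proof.
move=> hF e ep.
have [d dp hd] : exists2 d : R, 0 < d & forall x', `|x' - F y u| < d -> `|expR x' - expR (F y u)| < e.
  have := @continuous_expR R (F y u); move/cvgrPdist_lt => /(_ e ep).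
  move/nbhs_ballP => [r rp hr]; exists r => // x' hx.
  rewrite distrC; apply: hr; rewrite /ball /= distrC //.
have [r rp h] := hF _ dp; exists r => // y' u' a b.
exact: hd (h _ _ a b).
Qed.

Lemma jcs_sum (I : eqType) (s : seq I) (P : pred I) (F : I -> _ -> _ -> R) y u :
  (forall i, jcs (F i) y u) -> jcs (fun y u => \sum_(i <- s | P i) F i y u) y u.
Proof.
move=> hF; elim: s => [|i s IH].
  by apply: jcs_ext (jcs_const 0 y u) => y' u'; rewrite big_nil.
case hP : (P i).
  by apply: jcs_ext (jcs_add (hF i) IH) => y' u'; rewrite big_cons hP.
by apply: jcs_ext IH => y' u'; rewrite big_cons hP.
Qed.

Lemma jcs_local F H y u : jcs H y u ->
  (exists2 r0 : R, 0 < r0 & forall y' u', norm2 (y' - y) < r0 -> norm2 (u' - u) < r0 ->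
     F y' u' = H y' u') -> jcs F y u.
Proof.
move=> hH [r0 r0p h0] e ep; have [r rp h] := hH e ep.
exists (Num.min r r0); first exact: min_pos.
move=> y' u' /min_lt[a1 a2] /min_lt[b1 b2].
rewrite (h0 _ _ a2 b2) (h0 y u) ?subrr ?norm2_0 //; exact: h.
Qed.

Lemma jcs_pos_near F y u : jcs F y u -> 0 < F y u ->
  exists2 r0 : R, 0 < r0 & forall y' u', norm2 (y' - y) < r0 -> norm2 (u' - u) < r0 -> 0 < F y' u'.
Proof.
move=> hF hp; have [r rp h] := hF _ hp; exists r => // y' u' a b.
have := h _ _ a b; rewrite ltr_norml => /andP[h1 _]; lra.
Qed.

End Cont.
Section StepCont.
Variables (R : realType) (m p q : nat) (A : 'M[R]_(m, p * q))
  (Rr sigma : R) (d : 'I_p * 'I_q -> 'I_p * 'I_q -> R)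
  (eta0 eta1 nu0 nu1 nu2 : R).
Hypotheses (eta0p : 0 < eta0) (eta1p : 0 < eta1) (nu0p : 0 < nu0) (nu1p : 0 < nu1)
  (nu2p : 0 < nu2).
Implicit Types (y : 'cV[R]_m) (u : 'cV[R]_(p * q)).

Lemma Lap_entry u a : (Lap Rr sigma d u *m u) a 0 =
  \sum_b wfun Rr sigma d u a b * (u a 0 - u b 0).
Proof.
rewrite /Lap mulmxBl mxE /Dmat mul_diag_mx !mxE.
under [X in _ - X]eq_bigr => j _ do rewrite /Wmat mxE.
rewrite big_distrl -sumrB; apply: eq_bigr => b _; by rewrite mulrBr.
Qed.

Lemma jcv_L y u : jcv (fun y u => Lap Rr sigma d u *m u) y u.
Proof.
apply: jcv_entries => a.
have hu : forall i, jcs (fun (y : 'cV[R]_m) (u : 'cV[R]_(p * q)) => u i 0) y u.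
  move=> i; have h := jcv_u y u; have h' := jcs_entry i h; exact: h'.
have hd : forall b, jcs (fun (y : 'cV[R]_m) (u : 'cV[R]_(p * q)) => u a 0 - u b 0) y u.
  move=> b; have h := jcs_sub (hu a) (hu b); exact: h.
have hw : forall b, jcs (fun y u => wfun Rr sigma d u a b * (u a 0 - u b 0)) y u.
  move=> b.
  have h1 := jcs_mul (hd b) (hd b).
  have h2 := jcs_opp h1.
  have h3 := jcs_mul h2 (jcs_const sigma^-1 y u).
  have h4 := jcs_exp h3.
  have h5 := jcs_mul (jcs_const (gfun Rr d a b) y u) h4.
  have h6 := jcs_mul h5 (hd b).
  by apply: jcs_ext h6 => y' u' /=; rewrite /wfun /hfun expr2.
have hs := @jcs_sum _ _ _ _ (index_enum 'I_(p * q)) predT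
  (fun b y u => wfun Rr sigma d u a b * (u a 0 - u b 0)) y u hw.
by apply: jcs_ext hs => y' u'; rewrite Lap_entry.
Qed.

Lemma jcv_r y u : jcv (fun y u => A *m u - y) y u.
Proof.
have h1 := jcv_u y u.
have h2 := jcv_mul A h1.
have h3 := jcv_sub h2 (jcv_y y u).
exact: h3.
Qed.

Lemma jcv_g y u : jcv (fun y u => A^T *m (A *m u - y)) y u.
Proof. have h := jcv_mul A^T (jcv_r y u); exact: h. Qed.

Lemma jcs_sq k (F : 'cV[R]_m -> 'cV[R]_(p * q) -> 'cV[R]_k) y u :
  jcv F y u -> jcs (fun y u => norm2 (F y u) ^+ 2) y u.
Proof.
move=> hF; have h1 := jcs_norm hF; have h := jcs_mul h1 h1.
by apply: jcs_ext h => y' u'; rewrite expr2.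
Qed.

Lemma alpha_bnd y u : 0 <= alpha_step A eta0 eta1 y u <= eta1.
Proof.
rewrite /alpha_step; case: ifP => _; first by rewrite lexx ltW.
rewrite le_min ge_min lexx orbT andbT (ltW eta1p) andbT.
apply: divr_ge0; last exact: sqr_ge0.
apply: mulr_ge0; [exact: ltW | exact: sqr_ge0].
Qed.

Lemma beta_bnd y u : 0 <= beta_step A Rr sigma d nu0 nu1 nu2 y u <= nu2.
Proof.
rewrite /beta_step; case: ifP => _; last by rewrite lexx ltW.
rewrite !le_min !ge_min lexx !orbT (ltW nu2p) !andbT.
apply/andP; split; apply: divr_ge0; rewrite ?norm2_ge0 ?(ltW nu1p) //.
apply: mulr_ge0; [exact: ltW | exact: sqr_ge0].
Qed.

Lemma small_scale k (c x e : R) (v : 'cV[R]_k) : 0 < c -> 0 < e -> `|x| <= c ->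
  norm2 v < e / (c + 1) -> norm2 (x *: v) < e.
Proof.
move=> cp ep hx hv; rewrite norm2Z.
have c1 : 0 < c + 1 by lra.
move: hv; rewrite ltr_pdivlMr // => hv.
have h1 : `|x| * norm2 v <= c * norm2 v by apply: ler_wpM2r; rewrite ?norm2_ge0.
have h0 := norm2_ge0 v.
nra.
Qed.

Lemma jcv_ag y u : jcv (fun y u => alpha_step A eta0 eta1 y u *: (A^T *m (A *m u - y))) y u.
Proof.
have hg := jcv_g y u.
have [hg0|hgn] := eqVneq (norm2 (A^T *m (A *m u - y))) 0.
  move=> e ep.
  have c1 : 0 < eta1 + 1 := addr_gt0 eta1p ltr01.
  have [r rp h] := hg _ (divr_gt0 ep c1).
  exists r => // y' u' a b.
  rewrite (norm2_eq0 hg0) scaler0 subr0.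
  have := h _ _ a b; rewrite (norm2_eq0 hg0) subr0 => h'.
  apply: small_scale h' => //.
  by have /andP[h1 h2] := alpha_bnd y' u'; rewrite ger0_norm.
have ngp : 0 < norm2 (A^T *m (A *m u - y)) by rewrite lt_neqAle eq_sym hgn norm2_ge0.
have hng := jcs_norm hg.
have hr2 := jcs_sq (jcv_r y u).
have hg2 := jcs_sq hg.
have hg2n : norm2 (A^T *m (A *m u - y)) ^+ 2 != 0 by rewrite sqrf_eq0.
have hinv := jcs_inv hg2n hg2.
have h1 := jcs_mul (jcs_const eta0 y u) hr2.
have h2 := jcs_mul h1 hinv.
have hH := jcs_min h2 (jcs_const eta1 y u).
have ha : jcs (fun y u => alpha_step A eta0 eta1 y u) y u.
  apply: jcs_local hH _.
  have [r0 r0p h0] := jcs_pos_near hng ngp.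
  exists r0 => // y' u' a b; rewrite /alpha_step.
  by rewrite ifF //; apply/negbTE; rewrite gt_eqF // h0.
have hs := jcs_scale ha hg; exact: hs.
Qed.

Lemma jcv_bL y u : jcv (fun y u => beta_step A Rr sigma d nu0 nu1 nu2 y u *: (Lap Rr sigma d u *m u)) y u.
Proof.
have hL := jcv_L y u.
have [hL0|hLn] := eqVneq (Lap Rr sigma d u *m u) 0.
  move=> e ep.
  have c1 : 0 < nu2 + 1 := addr_gt0 nu2p ltr01.
  have [r rp h] := hL _ (divr_gt0 ep c1).
  exists r => // y' u' a b.
  rewrite hL0 scaler0 subr0.
  have := h _ _ a b; rewrite hL0 subr0 => h'.
  apply: small_scale h' => //.
  by have /andP[h1 h2] := beta_bnd y' u'; rewrite ger0_norm.
have nLp : 0 < norm2 (Lap Rr sigma d u *m u).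
  rewrite lt_neqAle norm2_ge0 andbT eq_sym; apply/negP => /eqP h.
  by move/eqP: hLn; apply; apply: norm2_eq0.
have hnL := jcs_norm hL.
have hr2 := jcs_sq (jcv_r y u).
have hnLn : norm2 (Lap Rr sigma d u *m u) != 0 by rewrite gt_eqF.
have hinv := jcs_inv hnLn hnL.
have h1 := jcs_mul (jcs_const nu0 y u) hr2.
have h2 := jcs_mul h1 hinv.
have h3 := jcs_mul (jcs_const nu1 y u) hinv.
have h4 := jcs_min h2 h3.
have hH := jcs_min h4 (jcs_const nu2 y u).
have hb : jcs (fun y u => beta_step A Rr sigma d nu0 nu1 nu2 y u) y u.
  apply: jcs_local hH _.
  have [r0 r0p h0] := jcs_pos_near hnL nLp.
  exists r0 => // y' u' a b; rewrite /beta_step.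
  rewrite ifT //; apply/negP => /eqP hz.
  by have := h0 _ _ a b; rewrite hz norm2_0 ltxx.
have hs := jcs_scale hb hL; exact: hs.
Qed.

Lemma jcv_step y u : jcv (fun y u => step A Rr sigma d eta0 eta1 nu0 nu1 nu2 y u) y u.
Proof.
have h1 := jcv_sub (jcv_u y u) (jcv_ag y u).
have h2 := jcv_sub h1 (jcv_bL y u).
exact: h2.
Qed.

End StepCont.

Unset Implicit Arguments.

Theorem theorem3p13 (R : realType) (m p q : nat)
  (A : 'M[R]_(m, p * q)) (Psi : 'cV[R]_m -> 'cV[R]_(p * q))
  (Rr sigma : R) (d : 'I_p * 'I_q -> 'I_p * 'I_q -> R)
  (eta0 eta1 nu0 nu1 nu2 eta tau wp : R)
  (udag : 'cV[R]_(p * q)) (vd : R -> 'cV[R]_m) :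
  0 < Rr -> 0 < sigma -> is_distance d ->
  0 < eta0 -> 0 < eta1 -> 0 < nu0 -> 0 < nu1 -> 0 < nu2 ->
  0 < eta -> eta * opnorm A ^+ 2 <= eta0 -> eta <= eta1 ->
  1 < tau ->
  0 < wp -> norm2 (udag - Psi (A *m udag)) <= wp ->
  (forall delta, 0 < delta -> norm2 (vd delta - A *m udag) <= delta) ->
  (forall eps, 0 < eps -> exists delta0, 0 < delta0 /\
     forall delta, 0 < delta -> delta < delta0 ->
       norm2 (Psi (vd delta) - Psi (A *m udag)) < eps) ->
  0 < eta - eta1 / tau - nu0 * (wp + nu1) - eta0 * eta1 ->
  exists usol : 'cV[R]_(p * q),
    A *m usol = A *m udag /\
    forall eps, 0 < eps -> exists delta0, 0 < delta0 /\
      forall delta, 0 < delta -> delta < delta0 ->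
        (exists k, is_stop_index A Psi Rr sigma d eta0 eta1 nu0 nu1 nu2 tau delta (vd delta) k) /\
        (forall k, is_stop_index A Psi Rr sigma d eta0 eta1 nu0 nu1 nu2 tau delta (vd delta) k ->
           norm2 (irmgl A Psi Rr sigma d eta0 eta1 nu0 nu1 nu2 (vd delta) k - usol) < eps).
Proof.
move=> Rrp sigp dist eta0p eta1p nu0p nu1p nu2p etap etaA eta_le tau1 wpp hwp0 hvd hPsi Cp.
have Cpos : 0 < Cst eta0 eta1 nu0 nu1 eta tau wp by [].
have vvE : vv A udag = A *m udag by [].
have taup : 0 < tau by apply: lt_trans tau1.
set it := irmgl A Psi Rr sigma d eta0 eta1 nu0 nu1 nu2.
have itS : forall y k, it y k.+1 = step A Rr sigma d eta0 eta1 nu0 nu1 nu2 y (it y k) by [].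
have [ub hub] := ubar_ex Rr sigma d eta0p nu0p nu1p nu2p etap etaA eta_le tau1 wpp Cpos hwp0.
have hsol := ubar_sol eta0p nu0p nu1p nu2p etap etaA eta_le tau1 wpp Cpos hwp0 hub.
rewrite vvE in hsol.
exists ub; split; first by rewrite hsol.
move=> eps ep.
pose U k := it (A *m udag) k.
have SC : forall k e, 0 < e -> exists2 d0 : R, 0 < d0 &
    forall delta, 0 < delta -> delta < d0 -> norm2 (it (vd delta) k - U k) < e.
  elim=> [|k IH] e e0.
    have [d0 [d0p h]] := hPsi e e0; by exists d0.
  have [r rp hr] := jcv_step A Rr sigma d eta0p eta1p nu0p nu1p nu2p (A *m udag) (U k) e0.
  have [d1 d1p h1] := IH r rp.
  exists (Num.min d1 r); first by rewrite lt_min d1p rp.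
  move=> delta dp; rewrite lt_min => /andP[dl1 dl2].
  rewrite /U !itS; apply: hr; last exact: h1.
  exact: le_lt_trans (hvd _ dp) dl2.
pose e1 := Num.min eps wp / 2.
have e1p : 0 < e1 by rewrite divr_gt0 // lt_min ep wpp.
have e1eps : e1 + e1 <= Num.min eps wp by rewrite /e1; lra.
have [K hK] := U_conv eta0p nu0p nu1p nu2p etap etaA eta_le tau1 wpp Cpos hwp0 hub e1p.
rewrite vvE in hK.
have opn0 := opnorm_ge0 A.
have good : forall k, exists2 d0 : R, 0 < d0 & forall delta, 0 < delta -> delta < d0 ->
    norm2 (it (vd delta) k - U k) < e1 /\
    (A *m U k = A *m udag \/ tau * delta < norm2 (A *m it (vd delta) k - vd delta)).
  move=> k.
  have [hk|hk] := eqVneq (A *m U k) (A *m udag).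
    have [d0 d0p h] := SC k e1 e1p; exists d0 => // delta dp dl.
    by split; [exact: h | left].
  set rho := norm2 (A *m U k - A *m udag).
  have rhop : 0 < rho.
    rewrite lt_neqAle norm2_ge0 andbT eq_sym; apply/negP => /eqP h.
    by move/eqP: hk; apply; apply/eqP; rewrite -subr_eq0; apply/eqP; apply: norm2_eq0.
  have c1 : 0 < 2 * (opnorm A + 1) by rewrite mulr_gt0 // ltr_pwDr.
  have c2 : 0 < 2 * (tau + 1) by rewrite mulr_gt0 // addr_gt0.
  have [d0 d0p h] := SC k _ (min_pos e1p (divr_gt0 rhop c1)).
  exists (Num.min d0 (rho / (2 * (tau + 1)))); first exact: min_pos d0p (divr_gt0 rhop c2).
  move=> delta dp /min_lt[dl1 dl2].
  have /min_lt[hA hB] := h _ dp dl1.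
  split => //; right.
  set w := it (vd delta) k.
  have E : A *m U k - A *m udag =
      A *m (U k - w) + (A *m w - vd delta) + (vd delta - A *m udag).
    by rewrite mulmxBr !addrA subrK addrNK.
  have t1 : rho <= norm2 (A *m (U k - w)) + norm2 (A *m w - vd delta) +
      norm2 (vd delta - A *m udag).
    rewrite /rho E; apply: le_trans (norm2D _ _) _; rewrite lerD2r.
    exact: norm2D.
  have t2 : norm2 (A *m (U k - w)) <= opnorm A * norm2 (w - U k).
    by rewrite norm2B; apply: opnorm_bound.
  have t3 : opnorm A * norm2 (w - U k) <= opnorm A * (rho / (2 * (opnorm A + 1))).
    by apply: ler_wpM2l => //; exact: ltW.
  have t4 : opnorm A * (rho / (2 * (opnorm A + 1))) <= rho / 2.
    rewrite mulrA ler_pdivrMr //.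
    have -> : rho / 2 * (2 * (opnorm A + 1)) = rho * (opnorm A + 1) by field.
    have : opnorm A * rho <= rho * (opnorm A + 1).
      by rewrite mulrC; apply: ler_wpM2l; [exact: ltW | rewrite lerDl ler01].
    lra.
  have t5 := hvd _ dp.
  have t6 : delta * (2 * (tau + 1)) < rho by rewrite -ltr_pdivlMr.
  lra.
have goodK : forall N, exists2 d0 : R, 0 < d0 & forall k, (k <= N)%N ->
    forall delta, 0 < delta -> delta < d0 ->
    norm2 (it (vd delta) k - U k) < e1 /\
    (A *m U k = A *m udag \/ tau * delta < norm2 (A *m it (vd delta) k - vd delta)).
  elim=> [|N [d1 d1p h1]].
    have [d0 d0p h] := good 0%N; exists d0 => // k; rewrite leqn0 => /eqP ->; exact: h.
  have [d0 d0p h] := good N.+1.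
  exists (Num.min d1 d0); first exact: min_pos d1p d0p.
  move=> k; rewrite leq_eqVlt ltnS => /orP[/eqP ->|hk] delta dp /min_lt[dl1 dl2].
    exact: h.
  exact: h1.
have [d0 d0p hd0] := goodK K.
exists d0; split => // delta dp dl.
have hy : norm2 (vd delta - A *m ub) <= delta by rewrite hsol; exact: hvd.
have [hKa _] := hd0 K (leqnn K) delta dp dl.
have hKb := hK K (leqnn K).
have hKub : norm2 (it (vd delta) K - ub) < e1 + e1.
  have -> : it (vd delta) K - ub = (it (vd delta) K - U K) + (U K - ub) by rewrite addrA subrK.
  apply: le_lt_trans (norm2D _ _) _; lra.
have hKw : norm2 (it (vd delta) K - ub) <= wp.
  apply: ltW; apply: (lt_le_trans hKub); apply: (le_trans e1eps); by rewrite ge_min lexx orbT.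
have hKe : norm2 (it (vd delta) K - ub) < eps.
  apply: (lt_le_trans hKub); apply: (le_trans e1eps); by rewrite ge_min lexx.
have hmono := run_mono eta0p nu0p nu1p nu2p etap etaA eta_le tau1 wpp Cpos (ltW dp) hy hKw.
split.
  pose P k := norm2 (A *m it (vd delta) k - vd delta) <= tau * delta.
  have exP : exists k, P k.
    have [//|hne] := pselect (exists k, P k).
    exfalso.
    have hall : forall k, tau * delta < norm2 (A *m it (vd delta) k - vd delta).
      move=> k; rewrite ltNge; apply/negP => hP; apply: hne; by exists k.
    have T0 : 0 < (tau * delta) ^+ 2 by rewrite exprn_gt0 // mulr_gt0.
    pose X := wp ^+ 2 / (2 * Cst eta0 eta1 nu0 nu1 eta tau wp * (tau * delta) ^+ 2).
    pose j := (Num.trunc X).+1.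
    have hj : X < j%:R by exact: truncnS_gt.
    have := run eta0p nu0p nu1p nu2p etap etaA eta_le tau1 wpp Cpos (K := K) (j := j)
      (ltW dp) hy hKw (fun i _ _ => ltW (hall i)).
    have hKsq : dot (it (vd delta) K - ub) (it (vd delta) K - ub) <= wp ^+ 2.
      by rewrite -norm2_sq; apply: lerXn2r; rewrite ?nnegrE ?norm2_ge0 // ltW.
    have D0 := dot_ge0 (it (vd delta) (K + j) - ub).
    have c3 : 0 < 2 * Cst eta0 eta1 nu0 nu1 eta tau wp * (tau * delta) ^+ 2.
      by rewrite !mulr_gt0.
    move: hj; rewrite /X ltr_pdivrMr // => hj.
    have -> : 2 * Cst eta0 eta1 nu0 nu1 eta tau wp * (j%:R * (tau * delta) ^+ 2) =
      j%:R * (2 * Cst eta0 eta1 nu0 nu1 eta tau wp * (tau * delta) ^+ 2) by ring.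
    move=> hr.
    have h1 := le_trans (le_trans (ler_wpDl D0 (lexx _)) hr) hKsq.
    by have := lt_le_trans hj h1; rewrite ltxx.
  case: (ex_minnP exP) => k hPk hmin.
  exists k; split => // i hi.
  rewrite ltNge; apply/negP => hPi.
  by have := hmin i hPi; rewrite leqNgt hi.
move=> k [hstop hmin].
case: (leqP k K) => hkK.
  have [h1 h2] := hd0 k hkK delta dp dl.
  case: h2 => [hsk|hlt]; last by exfalso; move: hstop; rewrite leNgt hlt.
  have hU := U_fixed eta0p nu0p nu1p nu2p etap etaA eta_le tau1 wpp Cpos hwp0 hub (k := k).
  rewrite vvE in hU; have hUk := hU hsk.
  rewrite /U in h1; rewrite -hUk.
  apply: (lt_le_trans h1).
  have e1le : e1 <= e1 + e1 by rewrite lerDl ltW.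
  apply: (le_trans e1le); apply: (le_trans e1eps); by rewrite ge_min lexx.
have -> : k = (K + (k - K))%N by rewrite subnKC // ltnW.
apply: le_lt_trans hKe.
apply: hmono => i hi1 hi2; apply: ltW; apply: hmin.
by move: hi2; rewrite subnKC // ltnW.
Qed.
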